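(* Let $n\ge 2$ and $\alpha=\pi/4$. For all $u,v\in\mathrm{Sym}(n)$, if $u<_B v$ then $\mathrm{B}^{\pi/4}_n(u)\prec \mathrm{B}^{\pi/4}_n(v)$.
   Context: $\mathrm{Sym}(n)$ is the group of permutations of $\{1,\dots,n\}$, written on the right: $(i)w$ is the image of $i$ under $w$, and $uv$ means ''first $u$, then $v$''. It is a Coxeter group with generators $s_i=(i,i+1)$, length function $\ell$, and set of reflections $T$ = all transpositions. The Bruhat order $<_B$ is the transitive closure of the relation $w<_B wt$ for $t\in T$ with $\ell(wt)=\ell(w)+1$. Borders: fix $n\ge2$ and $\alpha\in(0,\pi/2)$. For $k=1,\dots,n$ let $\theta_k=\frac{(k-1)(\pi-2\alpha)}{n-1}+\alpha$ and $\beta^k_n=(-\cos\theta_k,\ \sin\theta_k)\in\mathbb{R}^2$. For $w\in\mathrm{Sym}(n)$ and $i=0,\dots,n$ put $p_i(w)=\sum_{j=1}^{i}\beta_n^{(j)w^{-1}}$ (so $p_0(w)=0$). The border $\mathrm{B}^\alpha_n(w)$ is the polygonal path $\bigcup_{i=1}^n[p_{i-1}(w),p_i(w)]$ (its $i$-th edge being the segment $[p_{i-1}(w),p_i(w)]$). Since every $\beta^k_n$ has positive $y$-coordinate, the $y$-coordinate is strictly increasing along the path from $0$ to $h^\alpha_n=\sum_{k=1}^n\sin\theta_k$, so for each $y\in[0,h^\alpha_n]$ there is a unique point of $\mathrm{B}^\alpha_n(w)$ with $y$-coordinate $y$; denote its $x$-coordinate by $\mathrm{H}(\mathrm{B}^\alpha_n(w),y)$.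 For $u,v\in\mathrm{Sym}(n)$ we write $\mathrm{B}^\alpha_n(u)\prec\mathrm{B}^\alpha_n(v)$ (''precedes'') if $\mathrm{H}(\mathrm{B}^\alpha_n(u),y)\le \mathrm{H}(\mathrm{B}^\alpha_n(v),y)$ for all $0\le y\le h^\alpha_n$. *)

(* Defs.v *)
From HB Require Import structures.
From mathcomp Require Import all_boot all_order all_algebra all_fingroup.
From mathcomp Require Import all_classical all_reals all_analysis.
From Stdlib Require Import Relations.
Set Implicit Arguments. Unset Strict Implicit. Unset Printing Implicit Defensive.
Import Order.TTheory GRing.Theory Num.Theory.

(* Convention: points of {1..n} are the 0-based ordinals 'I_n (label k+1 <-> k).
   MathComp perm composition (s * t)%g x = t (s x) is "first s, then t",
   i.e. exactly the paper's right-action convention; (i)w is w i. *)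

Section Coxeter.
Variable n : nat.

Definition adjacent (p : 'I_n * 'I_n) : bool := val p.2 == (val p.1).+1.

Definition word_prod (s : seq ('I_n * 'I_n)) : 'S_n :=
  (\prod_(p <- s) tperm p.1 p.2)%g.

Definition coxeter_length_is (w : 'S_n) (k : nat) : Prop :=
  (exists s, [/\ all adjacent s, size s = k & word_prod s = w]) /\
  (forall s, all adjacent s -> word_prod s = w -> (k <= size s)%N).

Definition is_reflection (t : 'S_n) : Prop :=
  exists i j : 'I_n, i != j /\ t = tperm i j.

Definition bruhat_cover (w w' : 'S_n) : Prop :=
  exists t, [/\ is_reflection t, w' = (w * t)%g &
    exists k, coxeter_length_is w k /\ coxeter_length_is w' k.+1].

Definition bruhat_lt : 'S_n -> 'S_n -> Prop := clos_trans _ bruhat_cover.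
End Coxeter.

Section Borders.
Local Open Scope ring_scope.
Variable R : realType.
Variable n : nat.
Variable alpha : R.

(* theta_{k+1} for k : 'I_n *)
Definition theta (k : 'I_n) : R :=
  k%:R * (pi - 2 * alpha) / (n%:R - 1) + alpha.

Definition beta (k : 'I_n) : R * R := (- cos (theta k), sin (theta k)).

Definition border_pt (w : 'S_n) (i : nat) : R * R :=
  (\sum_(j < n | (j < i)%N) (beta ((w^-1)%g j)).1,
   \sum_(j < n | (j < i)%N) (beta ((w^-1)%g j)).2).

Definition on_segment (A B P : R * R) : Prop :=
  exists2 t : R, 0 <= t <= 1 &
    P = (A.1 + t * (B.1 - A.1), A.2 + t * (B.2 - A.2)).

Definition border (w : 'S_n) : set (R * R) :=
  fun P => exists i : 'I_n, on_segment (border_pt w i) (border_pt w i.+1) P.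

Definition border_height : R := \sum_(k < n) sin (theta k).

(* H(B^alpha_n(w), y): the x-coordinate of the (unique) point of the border
   with y-coordinate y *)
Definition H (w : 'S_n) (y : R) : R := xget 0 [set x | border w (x, y)].

Definition precedes (u v : 'S_n) : Prop :=
  forall y : R, 0 <= y <= border_height -> H u y <= H v y.
End Borders.

(* Main.v *)
Require Import Defs.
From HB Require Import structures.
From mathcomp Require Import all_boot all_order all_algebra all_fingroup.
From mathcomp Require Import all_classical all_reals all_analysis.
From mathcomp Require Import lra zify ring.

Section Comb.
Variable n : nat.
Implicit Types (s : {perm 'I_n}).

Definition ninv s : nat :=
  \sum_(p : 'I_n * 'I_n) ((p.1 < p.2)%N && (s p.2 < s p.1)%N).

Lemma ninv_adj s (k k' : 'I_n) : nat_of_ord k' = (nat_of_ord k).+1 ->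
  (s k < s k')%N -> ninv (tperm k k' * s)%g = (ninv s).+1.
Proof.
move=> ek lt.
have kk : k != k' by apply/eqP => e; move: ek; rewrite e; lia.
rewrite /ninv (reindex_inj (h := fun p : 'I_n * 'I_n => (tperm k k' p.1, tperm k k' p.2))); last first.
  by move=> [a b] [c d] /= [/(can_inj (tpermK _ _)) -> /(can_inj (tpermK _ _)) ->].
rewrite (bigD1 (k', k)) //= (bigD1 (k', k) (P := predT)) //=.
rewrite (bigD1 (k, k')) /=; last by rewrite xpair_eqE negb_and kk.
rewrite (bigD1 (k, k') (P := fun p => p != (k', k))) /=; last by rewrite xpair_eqE negb_and kk.
rewrite !permM !tpermK tpermL tpermR.
have l1 : (k < k')%N by rewrite ek.
have l2 : (k' < k)%N = false by apply/negbTE; rewrite -leqNgt ltnW.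
have l3 : (s k' < s k)%N = false by apply/negbTE; rewrite -leqNgt ltnW.
rewrite l1 l2 l3 lt /= add0n add1n; congr _.+1.
apply: eq_bigr => [[a b]] /andP [] /=; rewrite !xpair_eqE => h1 h2.
rewrite !permM !tpermK; congr (_ && _).
case: tpermP => [ea|ea|/eqP na1 /eqP na2]; case: tpermP => [eb|eb|/eqP nb1 /eqP nb2];
  subst; rewrite ?eqxx /= ?andbT ?andTb in h1 h2 *; try (by []);
  move: h1 h2; rewrite ?ek; try (move=> *; lia).
all: move=> *; repeat match goal with H : is_true (?x != ?y) |- _ => move/eqP: H => H end;
  repeat match goal with H : ?x <> ?y |- _ =>
    lazymatch type of x with 'I_n => have := (fun e : nat_of_ord x = nat_of_ord y => H (ord_inj e)); clear H end end;
  move=> *; apply/idP/idP => ?; lia.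
Qed.


Lemma ninv_adj' s (k k' : 'I_n) : nat_of_ord k' = (nat_of_ord k).+1 ->
  (s k' < s k)%N -> (ninv (tperm k k' * s)%g).+1 = ninv s.
Proof.
move=> ek lt; set s' := (tperm k k' * s)%g.
have -> : s = (tperm k k' * s')%g by rewrite /s' mulgA tperm2 mul1g.
apply: esym; apply: ninv_adj => //; by rewrite /s' !permM tpermL tpermR.
Qed.

Lemma tperm_conj (j k i : 'I_n) : k != j -> k != i -> j != i ->
  tperm j i = (tperm j k * tperm k i * tperm j k)%g.
Proof.
move=> kj ki ji; apply/permP => x; rewrite !permM.
case: (tpermP j i x) => [->|->|xj xi].
- by rewrite tpermL tpermL (tpermD ji ki).
- by rewrite (tpermD ji ki) tpermR tpermR.
- have jx : j != x by apply/eqP => e; apply: xj.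
  have ix : i != x by apply/eqP => e; apply: xi.
  have [ekx|kx] := eqVneq k x.
    rewrite -ekx.
    by rewrite tpermR (tpermD (x:=k) (y:=i) (z:=j)) ?tpermL // eq_sym.
  by rewrite (tpermD jx kx) (tpermD kx ix) (tpermD jx kx).
Qed.

Lemma ninv_swap d : forall (j i : 'I_n) s, (i - j = d.+1)%N ->
  (s j < s i)%N -> (ninv s < ninv (tperm j i * s)%g)%N.
Proof.
elim: d => [|d IH] j i s hd lt.
  by rewrite ninv_adj //; lia.
have hk : (j.+1 < n)%N by have := ltn_ord i; lia.
set k := Ordinal hk.
have kj : k != j by rewrite -(inj_eq val_inj) /=; apply/eqP; lia.
have ki : k != i by rewrite -(inj_eq val_inj) /=; apply/eqP; lia.
have ji : j != i by rewrite -(inj_eq val_inj) /=; apply/eqP; lia.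
have ek : nat_of_ord k = (nat_of_ord j).+1 by [].
pose s1 := (tperm j k * s)%g.
pose s2 := (tperm k i * s1)%g.
have E : (tperm j i * s)%g = (tperm j k * s2)%g.
  by rewrite /s2 /s1 (@tperm_conj j k i kj ki ji) -!mulgA.
rewrite E.
have e1j : s1 j = s k by rewrite !permM tpermL.
have e1k : s1 k = s j by rewrite !permM tpermR.
have e1i : s1 i = s i by rewrite !permM tpermD // eq_sym.
have e2j : s2 j = s k.
  by rewrite /s2 permM (tpermD kj (negbT (introF eqP (fun e => (negP ji) (introT eqP (esym e)))))) e1j.
have e2k : s2 k = s i by rewrite /s2 permM tpermL.
have IH1 : (ninv s1 < ninv s2)%N by apply: IH; [lia | rewrite e1k e1i].
have skj : s k != s j by rewrite (inj_eq perm_inj).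
have ski : s k != s i by rewrite (inj_eq perm_inj).
have D1 : s1 = (tperm j k * s)%g by [].
clearbody s1 s2.
case: (ltngtP (s k) (s j)) => [hkj|hjk|e]; last by move/ord_inj: e => e; rewrite e eqxx in skj.
- have h1 : (ninv s1).+1 = ninv s by rewrite D1; exact: @ninv_adj' s j k ek hkj.
  have h3 : ninv (tperm j k * s2)%g = (ninv s2).+1.
    by apply: ninv_adj => //; rewrite e2j e2k (ltn_trans hkj lt).
  lia.
- have h1 : ninv s1 = (ninv s).+1 by rewrite D1; exact: @ninv_adj s j k ek hjk.
  case: (ltngtP (s k) (s i)) => [hki|hik|e]; last by move/ord_inj: e => e; rewrite e eqxx in ski.
  + have h3 : ninv (tperm j k * s2)%g = (ninv s2).+1.
      by apply: ninv_adj => //; rewrite e2j e2k.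
    lia.
  + have h3 : (ninv (tperm j k * s2)%g).+1 = ninv s2.
      by apply: ninv_adj' => //; rewrite e2j e2k.
    lia.
Qed.


Lemma word_rcons (s : seq ('I_n * 'I_n)) p :
  word_prod (rcons s p) = (word_prod s * tperm p.1 p.2)%g.
Proof. by rewrite /word_prod big_rcons. Qed.

Lemma ninv_adj_le s (k k' : 'I_n) : nat_of_ord k' = (nat_of_ord k).+1 ->
  (ninv (tperm k k' * s)%g <= (ninv s).+1)%N.
Proof.
move=> ek.
have kk : k != k' by apply/eqP => e; move: ek; rewrite e; lia.
have skk : s k != s k' by rewrite (inj_eq perm_inj).
case: (ltngtP (s k) (s k')) => [h|h|e]; last by move/ord_inj: e => e; rewrite e eqxx in skk.
- by rewrite ninv_adj.
- have := @ninv_adj' s k k' ek h; lia.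
Qed.

Lemma ninv_word (w : seq ('I_n * 'I_n)) : all (@Defs.adjacent n) w ->
  (ninv (word_prod w)^-1 <= size w)%N.
Proof.
elim/last_ind: w => [|w p IH].
  move=> _; rewrite /word_prod big_nil invg1 /ninv leqn0; apply/eqP.
  by apply: big1 => q _; rewrite !perm1; case: ltngtP.
rewrite all_rcons => /andP [ap aw].
rewrite word_rcons invMg tpermV size_rcons.
have ek : nat_of_ord p.2 = (nat_of_ord p.1).+1 by apply/eqP.
apply: leq_trans (@ninv_adj_le ((word_prod w)^-1)%g p.1 p.2 ek) _; by rewrite ltnS IH.
Qed.

Lemma incr_ge (t : {perm 'I_n}) : (forall a b : 'I_n, (a < b)%N -> (t a < t b)%N) ->
  forall a : 'I_n, (a <= t a)%N.
Proof.
move=> inc.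
suff : forall m (hm : (m < n)%N), (m <= t (Ordinal hm))%N.
  by move=> h [a ha]; apply: h.
elim => [//|m IH] hm.
have hm' : (m < n)%N by lia.
have := IH hm'; have := inc (Ordinal hm') (Ordinal hm) (ltnSn m); lia.
Qed.

Lemma ninv0 s : ninv s = 0%N -> s = 1%g.
Proof.
move=> /eqP; rewrite /ninv sum_nat_eq0 => /forallP h.
have inc : forall a b : 'I_n, (a < b)%N -> (s a < s b)%N.
  move=> a b ab; have := h (a, b); rewrite /= ab /= eqb0 -leqNgt leq_eqVlt.
  case/orP => // /eqP/ord_inj/perm_inj e; by move: ab; rewrite e ltnn.
have inc' : forall a b : 'I_n, (a < b)%N -> (s^-1 a < s^-1 b)%g%N.
  move=> a b ab; case: (ltngtP (s^-1 a)%g (s^-1 b)%g) => // h'.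
    by have := inc _ _ h'; rewrite !permKV; lia.
  by move/ord_inj/perm_inj: h' => e; move: ab; rewrite e ltnn.
apply/permP => a; rewrite perm1; apply: ord_inj; apply/eqP; rewrite eqn_leq.
have := @incr_ge (s^-1)%g inc' (s a); rewrite permK => ->; by rewrite (@incr_ge s inc).
Qed.

Lemma desc_ex d s : forall a b : 'I_n, (b - a = d.+1)%N -> (s b < s a)%N ->
  exists k k' : 'I_n, nat_of_ord k' = (nat_of_ord k).+1 /\ (s k' < s k)%N.
Proof.
elim: d => [|d IH] a b hd lt.
  by exists a, b; split => //; lia.
have hk : (a.+1 < n)%N by have := ltn_ord b; lia.
set k := Ordinal hk.
have ska : s k != s a.
  by rewrite (inj_eq perm_inj) -(inj_eq val_inj) /=; apply/eqP; lia.
case: (ltngtP (s k) (s a)) => [h|h|e]; last by move/ord_inj: e => e; rewrite e eqxx in ska.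
- by exists a, k.
- by apply: (IH k b) => /=; [lia | apply: ltn_trans h].
Qed.

Lemma ex_word m : forall s, ninv s = m -> exists w,
  [/\ all (@Defs.adjacent n) w, size w = m & word_prod w = s^-1%g].
Proof.
elim: m => [|m IH] s hs.
  by exists [::]; rewrite (@ninv0 s hs) invg1 /word_prod big_nil.
have [p /andP [hp1 hp2]] : exists p : 'I_n * 'I_n, (p.1 < p.2)%N && (s p.2 < s p.1)%N.
  case: (boolP [exists p : 'I_n * 'I_n, (p.1 < p.2)%N && (s p.2 < s p.1)%N]).
    by move/existsP.
  move/existsPn => hn; move: hs; rewrite /ninv big1 // => q _.
  by rewrite (negbTE (hn q)).
have [k [k' [ek hk]]] := @desc_ex (p.2 - p.1).-1 s p.1 p.2 ltac:(lia) hp2.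
have := @ninv_adj' s k k' ek hk; rewrite hs => /eqP; rewrite eqSS => /eqP /IH [w [aw sw pw]].
exists (rcons w (k, k')); split.
- by rewrite all_rcons aw andbT /Defs.adjacent /= ek.
- by rewrite size_rcons sw.
- by rewrite word_rcons pw invMg tpermV -mulgA tperm2 mulg1.
Qed.

Lemma len_ninv (w : {perm 'I_n}) k : coxeter_length_is w k -> k = ninv (w^-1)%g.
Proof.
move=> [[s [as1 ss ps]] hmin].
apply/eqP; rewrite eqn_leq; apply/andP; split.
- have [s' [as' ss' ps']] := @ex_word _ (w^-1)%g (erefl (ninv (w^-1)%g)).
  rewrite -ss'; apply: hmin => //; by rewrite ps' invgK.
- by rewrite -ss -ps ninv_word.
Qed.

Lemma cover_swap (u v : {perm 'I_n}) : bruhat_cover u v ->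
  exists x y : 'I_n, [/\ (x < y)%N, v = (u * tperm x y)%g & ((u^-1)%g x < (u^-1)%g y)%N].
Proof.
move=> [t [[i [j [ij ->]]] -> [k [lu lv]]]].
have key : forall x y : 'I_n, (x < y)%N -> tperm i j = tperm x y ->
    exists x y : 'I_n, [/\ (x < y)%N, (u * tperm i j)%g = (u * tperm x y)%g &
      ((u^-1)%g x < (u^-1)%g y)%N].
  move=> x y xy e; exists x, y; split; rewrite ?e //.
  have sxy : (u^-1)%g x != (u^-1)%g y.
    by rewrite (inj_eq perm_inj); apply/eqP => e'; move: xy; rewrite e' ltnn.
  case: (ltngtP ((u^-1)%g x) ((u^-1)%g y)) => // [h|e']; last first.
    by move/ord_inj: e' => e'; rewrite e' eqxx in sxy.
  exfalso.
  have ku := @len_ninv _ _ lu; have kv := @len_ninv _ _ lv.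
  rewrite e invMg tpermV in kv.
  set s' := (tperm x y * u^-1)%g in kv.
  have := @ninv_swap (y - x).-1 x y s' ltac:(lia).
  rewrite /s' !permM tpermL tpermR => /(_ h).
  by rewrite mulgA tperm2 mul1g -ku -kv; lia.
case: (ltngtP i j) => [h|h|e].
- exact: key h (erefl _).
- by apply: key h _; rewrite tpermC.
- by move/ord_inj: e => e; rewrite e eqxx in ij.
Qed.

End Comb.

Import Order.TTheory GRing.Theory Num.Theory.
Local Open Scope ring_scope.

Section Trig.
Variable R : realType.
Variable n : nat.
Hypothesis hn : (2 <= n)%N.

Let a4 : R := pi / 4.

Lemma c4_pos : 0 < cos a4.
Proof. apply: cos_gt0_pihalf; have := pi_gt0 R; rewrite /a4; lra. Qed.

Lemma s4_c4 : sin a4 = cos a4.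
Proof.
have := tan_piquarter R; rewrite /tan -/a4 => h.
have c0 : cos a4 != 0 by rewrite gt_eqF // c4_pos.
by rewrite -[LHS](divfK c0) h mul1r.
Qed.

Definition phi (k : 'I_n) : R := k%:R * (pi - 2 * a4) / (n%:R - 1).

Lemma phi_range (k : 'I_n) : 0 <= phi k <= pi / 2.
Proof.
have n1 : 1 < n%:R :> R by rewrite (_ : 1 = 1%:R) // ltr_nat.
have kn : k%:R <= n%:R - 1 :> R.
  have : (k.+1 <= n)%N := ltn_ord k.
  by rewrite -(ler_nat R) -addn1 natrD; lra.
have hpi := pi_gt0 R.
have e : pi - 2 * a4 = pi / 2 by rewrite /a4; field.
rewrite /phi e; apply/andP; split.
  by apply: divr_ge0; [apply: mulr_ge0; [apply: ler0n|lra] | lra].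
rewrite ler_pdivrMr; last by lra.
by nra.
Qed.

Lemma phi_mono (k k' : 'I_n) : (k <= k')%N -> phi k <= phi k'.
Proof.
move=> kk.
have n1 : 1 < n%:R :> R by rewrite (_ : 1 = 1%:R) // ltr_nat.
have hpi := pi_gt0 R.
have e : pi - 2 * a4 = pi / 2 by rewrite /a4; field.
rewrite /phi e ler_pM2r; last by rewrite invr_gt0; lra.
rewrite ler_pM2r; last by lra.
by rewrite ler_nat.
Qed.

Lemma theta_phi (k : 'I_n) : theta a4 k = phi k + a4.
Proof. by []. Qed.

Definition sF (P : R * R) : R := P.2 + P.1.
Definition tF (P : R * R) : R := P.2 - P.1.

Lemma beta_sF (k : 'I_n) : sF (beta a4 k) = 2 * cos a4 * sin (phi k).
Proof.
rewrite /sF /beta /= theta_phi sinD cosD s4_c4; ring.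
Qed.

Lemma beta_tF (k : 'I_n) : tF (beta a4 k) = 2 * cos a4 * cos (phi k).
Proof.
rewrite /tF /beta /= theta_phi sinD cosD s4_c4; ring.
Qed.

Lemma beta2_pos (k : 'I_n) : 0 < (beta a4 k).2.
Proof.
rewrite /beta /= theta_phi sinD s4_c4.
have := phi_range k => /andP [h1 h2].
have hs : 0 <= sin (phi k) by apply: sin_ge0_pi; have := pi_gt0 R; lra.
have hc : 0 <= cos (phi k) by apply: cos_ge0_pihalf; lra.
have h1' : 1 <= sin (phi k) + cos (phi k).
  have e := cos2Dsin2 (phi k).
  have : 1 <= (sin (phi k) + cos (phi k)) ^+ 2 by rewrite sqrrD; nra.
  move=> hh; have hs2 : 0 <= sin (phi k) + cos (phi k) by lra.
  by nra.
have := c4_pos; nra.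
Qed.

Lemma beta_sF_ge0 (k : 'I_n) : 0 <= sF (beta a4 k).
Proof.
rewrite beta_sF; have := phi_range k => /andP [h1 h2].
have hs : 0 <= sin (phi k) by apply: sin_ge0_pi; have := pi_gt0 R; lra.
have := c4_pos; nra.
Qed.

Lemma beta_tF_ge0 (k : 'I_n) : 0 <= tF (beta a4 k).
Proof.
rewrite beta_tF; have := phi_range k => /andP [h1 h2].
have hc : 0 <= cos (phi k) by apply: cos_ge0_pihalf; lra.
have := c4_pos; nra.
Qed.

Lemma beta_mono (k k' : 'I_n) : (k <= k')%N ->
  sF (beta a4 k) <= sF (beta a4 k') /\ tF (beta a4 k') <= tF (beta a4 k).
Proof.
move=> kk; rewrite !beta_sF !beta_tF.
have := phi_range k => /andP [h1 h2].
have := phi_range k' => /andP [h1' h2'].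
have hm := @phi_mono k k' kk.
have hpi := pi_gt0 R.
have hc := c4_pos.
have [e|lt] := eqVneq (phi k) (phi k'); first by rewrite e; lra.
have lt' : phi k < phi k' by rewrite lt_neqAle lt hm.
split.
- have : sin (phi k) < sin (phi k').
    by rewrite ltr_sin // in_itv /=; apply/andP; split; lra.
  nra.
- have : cos (phi k') < cos (phi k).
    by rewrite ltr_cos // in_itv /=; apply/andP; split; lra.
  nra.
Qed.

End Trig.

Arguments border_pt : simpl never.
Arguments beta : simpl never.

Section Geo.
Variable R : realType.
Variable n : nat.
Hypothesis hn : (2 <= n)%N.

Local Notation a4 := (pi / 4 : R).
Local Notation Pt w i := (border_pt a4 w i).
Local Notation bt k := (beta a4 k).
Local Notation sF := (@sF R).
Local Notation tF := (@tF R).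
Let beta_sF_ge0 := @beta_sF_ge0 R n hn.
Let beta_tF_ge0 := @beta_tF_ge0 R n hn.
Let beta2_pos := @beta2_pos R n hn.
Let beta_mono := @beta_mono R n hn.

Lemma pt0 (w : {perm 'I_n}) : Pt w 0 = (0, 0).
Proof. by rewrite /border_pt !big_pred0. Qed.

Lemma sum_split (F : 'I_n -> R) (i : 'I_n) :
  \sum_(j < n | (j < i.+1)%N) F j = \sum_(j < n | (j < i)%N) F j + F i.
Proof.
rewrite (bigD1 i) //= addrC; congr (_ + _); apply: eq_bigl => j.
rewrite ltnS -(inj_eq val_inj) /= leq_eqVlt.
by case: ltngtP.
Qed.

Lemma ptS (w : {perm 'I_n}) (i : 'I_n) :
  Pt w i.+1 = ((Pt w i).1 + (bt ((w^-1)%g i)).1, (Pt w i).2 + (bt ((w^-1)%g i)).2).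
Proof. by rewrite /border_pt /= !sum_split. Qed.

Lemma ptn (w : {perm 'I_n}) : (Pt w n).2 = border_height n a4.
Proof.
rewrite /border_pt /border_height /=.
rewrite (eq_bigl xpredT); last by move=> j; rewrite ltn_ord.
by rewrite [RHS](reindex_inj (h := (w^-1)%g) perm_inj).
Qed.


Lemma ptS1 (w : {perm 'I_n}) (i : 'I_n) :
  (Pt w i.+1).1 = (Pt w i).1 + (bt ((w^-1)%g i)).1.
Proof. by rewrite ptS. Qed.
Lemma ptS2 (w : {perm 'I_n}) (i : 'I_n) :
  (Pt w i.+1).2 = (Pt w i).2 + (bt ((w^-1)%g i)).2.
Proof. by rewrite ptS. Qed.

Lemma pt_step (w : {perm 'I_n}) (i : nat) : (i < n)%N ->
  sF (Pt w i) <= sF (Pt w i.+1) /\ tF (Pt w i) <= tF (Pt w i.+1).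
Proof.
move=> hi; have := ptS w (Ordinal hi); rewrite /= => ->.
have h1 := beta_sF_ge0 ((w^-1)%g (Ordinal hi)).
have h2 := beta_tF_ge0 ((w^-1)%g (Ordinal hi)).
rewrite /sF /tF /= in h1 h2 *; split; lra.
Qed.

Lemma pt_mono (w : {perm 'I_n}) (i j : nat) : (i <= j)%N -> (j <= n)%N ->
  sF (Pt w i) <= sF (Pt w j) /\ tF (Pt w i) <= tF (Pt w j).
Proof.
move=> ij jn; elim: j ij jn => [|j IH] ij jn.
  by move: ij; rewrite leqn0 => /eqP ->; split.
move: ij; rewrite leq_eqVlt => /orP [/eqP ->|]; first by split.
rewrite ltnS => ij.
have [h1 h2] := IH ij (ltnW jn).
have [h3 h4] := @pt_step w j jn.
split; lra.
Qed.

Lemma seg_form (w : {perm 'I_n}) (i : 'I_n) Q :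
  on_segment (Pt w i) (Pt w i.+1) Q ->
  exists2 t : R, 0 <= t <= 1 &
    Q.1 = (Pt w i).1 + t * (bt ((w^-1)%g i)).1 /\ Q.2 = (Pt w i).2 + t * (bt ((w^-1)%g i)).2.
Proof.
move=> [t ht ->]; exists t => //; rewrite ptS /=; split; ring.
Qed.
Arguments seg_form {w i Q}.


Lemma seg_bounds (w : {perm 'I_n}) (i : 'I_n) Q :
  on_segment (Pt w i) (Pt w i.+1) Q ->
  [/\ sF (Pt w i) <= sF Q, sF Q <= sF (Pt w i.+1),
      tF (Pt w i) <= tF Q & tF Q <= tF (Pt w i.+1)].
Proof.
move=> hQ; have [t /andP [t0 t1] [e1 e2]] := seg_form hQ.
rewrite /sF /tF ptS1 ptS2 e1 e2.
have h1 := beta_sF_ge0 ((w^-1)%g i).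
have h2 := beta_tF_ge0 ((w^-1)%g i).
rewrite /sF /tF in h1 h2.
set b1 := (bt _).1 in h1 h2 *; set b2 := (bt _).2 in h1 h2 *.
split; nra.
Qed.
Arguments seg_bounds {w i Q}.


Lemma comparable (w : {perm 'I_n}) Q1 Q2 : border a4 w Q1 -> border a4 w Q2 ->
  (sF Q1 <= sF Q2 /\ tF Q1 <= tF Q2) \/ (sF Q2 <= sF Q1 /\ tF Q2 <= tF Q1).
Proof.
have gen : forall (i1 i2 : 'I_n) Q1 Q2, (i1 < i2)%N ->
    on_segment (Pt w i1) (Pt w i1.+1) Q1 -> on_segment (Pt w i2) (Pt w i2.+1) Q2 ->
    sF Q1 <= sF Q2 /\ tF Q1 <= tF Q2.
  move=> i1 i2 P1 P2 lt h1 h2.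
  have [_ a2 _ a4'] := seg_bounds h1.
  have [b1 _ b3 _] := seg_bounds h2.
  have [c1 c2] := @pt_mono w i1.+1 i2 lt (ltnW (ltn_ord i2)).
  split; lra.
move=> [i1 h1] [i2 h2].
case: (ltngtP i1 i2) => [lt|lt|e].
- by left; apply: gen lt h1 h2.
- by right; apply: gen lt h2 h1.
- have e' : i1 = i2 by apply: ord_inj.
  subst i2.
  have [t1 /andP [t10 t11] [e11 e12]] := seg_form h1.
  have [t2 /andP [t20 t21] [e21 e22]] := seg_form h2.
  have hs := beta_sF_ge0 ((w^-1)%g i1).
  have ht := beta_tF_ge0 ((w^-1)%g i1).
  rewrite /sF /tF in hs ht *; rewrite e11 e12 e21 e22.
  set b1 := (bt _).1 in hs ht *; set b2 := (bt _).2 in hs ht *.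
  case: (lerP t1 t2) => tt; [left|right]; split; nra.
Qed.
Arguments comparable {w Q1 Q2}.


Lemma mono_pt (w : {perm 'I_n}) Rr P : border a4 w Rr -> border a4 w P ->
  (P.2 <= Rr.2 -> sF P <= sF Rr) /\ (Rr.2 <= P.2 -> tF Rr <= tF P).
Proof.
move=> hR hP; have := comparable hR hP; rewrite /sF /tF; move=> [[h1 h2]|[h1 h2]];
  split => h; lra.
Qed.
Arguments mono_pt {w Rr P}.


Lemma uniq_pt (w : {perm 'I_n}) x1 x2 c : border a4 w (x1, c) -> border a4 w (x2, c) ->
  x1 = x2.
Proof.
move=> h1 h2; have := comparable h1 h2; rewrite /sF /tF /=; move=> [[a b]|[a b]]; lra.
Qed.
Arguments uniq_pt {w x1 x2 c}.


Lemma ex_aux (w : {perm 'I_n}) m : (m <= n)%N -> forall c, 0 <= c <= (Pt w m).2 ->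
  (0 < m)%N -> exists x, border a4 w (x, c).
Proof.
elim: m => [//|m IH] mn c /andP [c0 c1] _.
have hm : (m < n)%N by [].
have hb := beta2_pos ((w^-1)%g (Ordinal hm)).
case: (boolP ((0 < m)%N && (c <= (Pt w m).2))) => [/andP [m0 cm]|hc].
  by apply: IH => //; [exact: ltnW | rewrite c0 cm].
have cm : (Pt w m).2 <= c.
  move: hc; rewrite negb_and => /orP [|]; last by rewrite -ltNge => /ltW.
  by rewrite -leqNgt leqn0 => /eqP m0; subst m; rewrite pt0.
set b := bt ((w^-1)%g (Ordinal hm)) in hb.
exists ((Pt w m).1 + (c - (Pt w m).2) / b.2 * b.1).
exists (Ordinal hm).
have c1' := c1; rewrite (ptS2 w (Ordinal hm)) -/b in c1'.
exists ((c - (Pt w m).2) / b.2).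
  apply/andP; split; first by apply: divr_ge0; lra.
  by rewrite ler_pdivrMr // mul1r; lra.
rewrite (ptS1 w (Ordinal hm)) (ptS2 w (Ordinal hm)) -/b.
congr pair; first by ring.
field; lra.
Qed.

Lemma H_spec (w : {perm 'I_n}) c : 0 <= c <= border_height n a4 ->
  border a4 w (H a4 w c, c).
Proof.
move=> hc.
have [x hx] : exists x, border a4 w (x, c).
  apply: (@ex_aux w n) => //; [by rewrite ptn | lia].
exact: (xgetPex 0 (P := [set x | border a4 w (x, c)]) (ex_intro _ x hx)).
Qed.

Section Swap.
Variables (u : {perm 'I_n}) (x y : 'I_n).
Hypothesis hxy : (x < y)%N.
Hypothesis hsig : ((u^-1)%g x < (u^-1)%g y)%N.
Let v := (u * tperm x y)%g.

Lemma inv_v j : (v^-1)%g j = (u^-1)%g (tperm x y j).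
Proof. by rewrite /v invMg tpermV permM. Qed.

Let D1 := (bt ((u^-1)%g y)).1 - (bt ((u^-1)%g x)).1.
Let D2 := (bt ((u^-1)%g y)).2 - (bt ((u^-1)%g x)).2.

Lemma ptv (i : nat) : (i <= n)%N ->
  (((i <= x)%N || (y < i)%N) -> (Pt v i).1 = (Pt u i).1 /\ (Pt v i).2 = (Pt u i).2) /\
  ((x < i <= y)%N -> (Pt v i).1 = (Pt u i).1 + D1 /\ (Pt v i).2 = (Pt u i).2 + D2).
Proof.
elim: i => [|i IH] hi.
  by rewrite !pt0; split => // /andP [].
have hio : (i < n)%N by [].
have [IH1 IH2] := IH (ltnW hi).
set io := Ordinal hio.
rewrite (ptS1 v io) (ptS2 v io) (ptS1 u io) (ptS2 u io) inv_v.
have [ex|nx] := eqVneq io x.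
  rewrite ex tpermL.
  have ix : i = x by rewrite -ex.
  have [e1 e2] := IH1 ltac:(by rewrite ix leqnn).
  rewrite ix in e1 e2; rewrite e1 e2; split; first by move=> /orP []; lia.
  move=> _; rewrite /D1 /D2 -ex; split; lra.
have [ey|ny] := eqVneq io y.
  rewrite ey tpermR.
  have iy : i = y by rewrite -ey.
  have [e1 e2] := IH2 ltac:(by rewrite iy hxy leqnn).
  rewrite iy in e1 e2; rewrite e1 e2; split; last by move=> /andP []; lia.
  move=> _; rewrite /D1 /D2 -ey; split; lra.
rewrite tpermD; [|by rewrite eq_sym|by rewrite eq_sym].
have nx' : i <> x by move=> e; move: nx; rewrite -(inj_eq val_inj) /= e eqxx.
have ny' : i <> y by move=> e; move: ny; rewrite -(inj_eq val_inj) /= e eqxx.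
split => h.
- have [e1 e2] := IH1 ltac:(apply/orP; move: h => /orP []; lia).
  by rewrite e1 e2.
- have [e1 e2] := IH2 ltac:(apply/andP; move: h => /andP []; lia).
  rewrite e1 e2; split; ring.
Qed.


Lemma mk_seg (w : {perm 'I_n}) (i : 'I_n) (t : R) : 0 <= t <= 1 ->
  border a4 w ((Pt w i).1 + t * (bt ((w^-1)%g i)).1, (Pt w i).2 + t * (bt ((w^-1)%g i)).2).
Proof. by move=> ht; exists i; exists t => //; rewrite ptS1 ptS2; congr pair; ring. Qed.

Definition good (Q P : R * R) : Prop :=
  (P.2 <= Q.2 /\ sF Q <= sF P) \/ (Q.2 <= P.2 /\ tF P <= tF Q).

Lemma ltn_neq_ord (a b : 'I_n) : (a < b)%N -> a != b.
Proof. by move=> h; apply/eqP => e; move: h; rewrite e ltnn. Qed.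

Lemma ex_goodP (Q : R * R) a b : border a4 v (a, b) ->
  ((b <= Q.2 /\ Q.2 + Q.1 <= b + a) \/ (Q.2 <= b /\ b - a <= Q.2 - Q.1)) ->
  exists P, border a4 v P /\ good Q P.
Proof. by move=> h g; exists (a, b). Qed.

Lemma main_pt (Q : R * R) : border a4 u Q -> exists P, border a4 v P /\ good Q P.
Proof.
move=> [i hQ]; have [t /andP [t0 t1] [eq1 eq2]] := seg_form hQ.
have xy : x != y by apply: ltn_neq_ord.
have hs := hsig.
set p := (u^-1)%g x in hs *; set q := (u^-1)%g y in hs *.
have [msp mtq] := beta_mono p q (ltnW hs).
have hsp := beta_sF_ge0 p; have hsq := beta_sF_ge0 q.
have htp := beta_tF_ge0 p; have htq := beta_tF_ge0 q.
have hp2 := beta2_pos p; have hq2 := beta2_pos q.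
have [hpp1 hpp2] := ptv i (ltnW (ltn_ord i)).
have [hpq1 hpq2] := ptv i.+1 (ltn_ord i).
rewrite /sF /tF in msp mtq hsp hsq htp htq.
have eD1 : D1 = (bt q).1 - (bt p).1 by [].
have eD2 : D2 = (bt q).2 - (bt p).2 by [].
have vi : forall j : 'I_n, j != x -> j != y -> (v^-1)%g j = (u^-1)%g j.
  by move=> j jx jy; rewrite inv_v tpermD // eq_sym.
case: (ltngtP i x) => [ix|xi|eix].
- have ix' : i != x by apply: ltn_neq_ord.
  have iy' : i != y by apply: ltn_neq_ord; apply: ltn_trans hxy.
  have [e1 e2] := hpp1 ltac:(by rewrite (ltnW ix)).
  have := mk_seg v i t ltac:(by rewrite t0 t1); rewrite vi // e1 e2 -eq1 -eq2 -surjective_pairing => hb.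
  by exists Q; split => //; left; rewrite /sF; split; lra.
- case: (ltngtP i y) => [iy|yi|eiy].
  + have ix' : i != x by rewrite eq_sym; apply: ltn_neq_ord.
    have iy' : i != y by apply: ltn_neq_ord.
    have [e1 e2] := hpp2 ltac:(by rewrite xi (ltnW iy)).
    have hb := mk_seg v i t ltac:(by rewrite t0 t1); rewrite vi // e1 e2 in hb.
    apply: (@ex_goodP Q _ _ hb).
    have [hD|hD] : 0 <= D2 \/ D2 <= 0.
      by case: (lerP 0 D2) => h; [left|right; apply: ltW].
    - by right; split; lra.
    - by left; split; lra.
  + have ix' : i != x by rewrite eq_sym; apply: ltn_neq_ord.
    have iy' : i != y by rewrite eq_sym; apply: ltn_neq_ord.
    have [e1 e2] := hpp1 ltac:(by rewrite yi orbT).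
    have := mk_seg v i t ltac:(by rewrite t0 t1); rewrite vi // e1 e2 -eq1 -eq2 -surjective_pairing => hb.
    by exists Q; split => //; left; rewrite /sF; split; lra.
  +
    have ey : i = y by apply: ord_inj.
    subst i.
    have [e1 e2] := hpp2 ltac:(by rewrite hxy leqnn).
    rewrite -/q in eq1 eq2.
    have vy : (v^-1)%g y = p by rewrite inv_v tpermR.
    set B1 := (Pt v y).1 in e1 *; set B2 := (Pt v y).2 in e2 *.
    set A1 := (Pt u y).1 in e1 eq1; set A2 := (Pt u y).2 in e2 eq2.
    rewrite eD1 eD2 in e1 e2.
    set bp1 := (bt p).1 in hsp htp hp2 msp mtq e1 e2 *.
    set bp2 := (bt p).2 in hsp htp hp2 msp mtq e1 e2 *.
    set bq1 := (bt q).1 in hsq htq hq2 msp mtq e1 e2 eq1 *.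
    set bq2 := (bt q).2 in hsq htq hq2 msp mtq e1 e2 eq2 *.
    case: (lerP ((1 - t) * bq2) bp2) => hc.
    * set nu := (1 - t) * bq2 / bp2.
      have nu0 : 0 <= nu by apply: divr_ge0; nra.
      have nu1 : nu <= 1 by rewrite /nu ler_pdivrMr // mul1r.
      have hb := mk_seg v y (1 - nu) ltac:(apply/andP; split; lra).
      rewrite vy -/B1 -/B2 -/bp1 -/bp2 in hb.
      apply: (@ex_goodP Q _ _ hb); right.
      have enu : nu * bp2 = (1 - t) * bq2 by rewrite /nu divfK // gt_eqF.
      have key : (1 - t) * (bq2 - bq1) <= nu * (bp2 - bp1).
        have h0 : (bq2 + bq1) * (bp2 - bp1) >= (bp2 + bp1) * (bq2 - bq1) by nra.
        have : ((1 - t) * (bq2 - bq1) - nu * (bp2 - bp1)) * bp2 <= 0.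
          have -> : ((1 - t) * (bq2 - bq1) - nu * (bp2 - bp1)) * bp2 =
             (1 - t) * ((bq2 - bq1) * bp2 - bq2 * (bp2 - bp1)).
            by rewrite /nu; field; rewrite gt_eqF.
          apply: mulr_ge0_le0; first lra.
          nra.
        move=> hh.
        have : (1 - t) * (bq2 - bq1) - nu * (bp2 - bp1) <= 0.
          by rewrite -(pmulr_rle0 _ hp2) mulrC.
        lra.
      split; nra.
    * have hb := mk_seg v y (0) ltac:(apply/andP; split; lra).
      rewrite vy -/B1 -/B2 !mul0r !addr0 in hb.
      apply: (@ex_goodP Q _ _ hb); right; split; nra.
-
  have ex : i = x by apply: ord_inj.
  subst i.
  have [e1 e2] := hpp1 ltac:(by rewrite leqnn).
  rewrite -/p in eq1 eq2.
  have vx : (v^-1)%g x = q by rewrite inv_v tpermL.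
  set A1 := (Pt u x).1 in e1 eq1 *; set A2 := (Pt u x).2 in e2 eq2 *.
  set bp1 := (bt p).1 in hsp htp hp2 msp mtq eq1 *.
  set bp2 := (bt p).2 in hsp htp hp2 msp mtq eq2 *.
  set bq1 := (bt q).1 in hsq htq hq2 msp mtq *.
  set bq2 := (bt q).2 in hsq htq hq2 msp mtq *.
  case: (lerP (t * bp2) bq2) => hc.
  * set mu := t * bp2 / bq2.
    have mu0 : 0 <= mu by apply: divr_ge0; nra.
    have mu1 : mu <= 1 by rewrite /mu ler_pdivrMr // mul1r.
    have hb := mk_seg v x (mu) ltac:(apply/andP; split; lra).
    rewrite vx e1 e2 -/bq1 -/bq2 in hb.
    apply: (@ex_goodP Q _ _ hb); left.
    have emu : mu * bq2 = t * bp2 by rewrite /mu divfK // gt_eqF.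
    have key : t * (bp2 + bp1) <= mu * (bq2 + bq1).
      have : (t * (bp2 + bp1) - mu * (bq2 + bq1)) * bq2 <= 0.
        have -> : (t * (bp2 + bp1) - mu * (bq2 + bq1)) * bq2 =
           t * ((bp2 + bp1) * bq2 - bp2 * (bq2 + bq1)).
          by rewrite /mu; field; rewrite gt_eqF.
        apply: mulr_ge0_le0; first lra.
        nra.
      move=> hh.
      have : t * (bp2 + bp1) - mu * (bq2 + bq1) <= 0.
        by rewrite -(pmulr_rle0 _ hq2) mulrC.
      lra.
    split; nra.
  * have hb := mk_seg v x (1) ltac:(apply/andP; split; lra).
    rewrite vx e1 e2 -/bq1 -/bq2 !mul1r in hb.
    apply: (@ex_goodP Q _ _ hb); left; split; nra.
Qed.

Lemma prec_swap : precedes a4 u v.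
Proof.
move=> c hc.
have hQ := H_spec u c hc; have hR := H_spec v c hc.
have [P [hP hg]] := main_pt _ hQ.
have [m1 m2] := mono_pt hR hP.
move: hg; rewrite /good /sF /tF /= in m1 m2 *.
move=> [[a b]|[a b]].
- have := m1 a; lra.
- have := m2 a; lra.
Qed.

End Swap.
End Geo.


Theorem theorem1p4 (R : realType) (n : nat) (hn : (2 <= n)%N) (u v : 'S_n) :
  bruhat_lt u v -> precedes (pi / 4 : R) u v.
Proof.
elim => [a b hab|a b c _ h1 _ h2].
- have [x [y [xy -> hs]]] := @cover_swap n a b hab.
  exact: (@prec_swap R n hn a x y xy hs).
- move=> y hy; exact: le_trans (h1 y hy) (h2 y hy).
Qed.
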